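(* If $P$ is a finite interval order having an interval representation in which every interval has length $0$ or $1$, then $\dim(P) \le 3$.
   Context: Posets are finite and reflexive. An interval representation of a poset $P$ assigns to each element $x$ a closed bounded interval $[\ell(x), r(x)]$ (possibly degenerate, $\ell(x)=r(x)$, which has length $0$) such that for distinct $x,y$, $x<y$ in $P$ if and only if $r(x)<\ell(y)$. The dimension $\dim(P)$ is the minimum number of linear extensions of $P$ whose intersection is $P$ (i.e. $x<y$ in $P$ iff $x<y$ in each of them). *)

(* Defs.v *)
From mathcomp Require Import all_boot all_order all_algebra.
From mathcomp Require Import reals.
Set Implicit Arguments. Unset Strict Implicit. Unset Printing Implicit Defensive.
Import Order.TTheory GRing.Theory Num.Theory.
Local Open Scope ring_scope.

Definition is_poset (T : finType) (le : rel T) : Prop :=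
  reflexive le /\ antisymmetric le /\ transitive le.

Definition interval_rep (R : realType) (T : finType) (le : rel T)
    (l r : T -> R) : Prop :=
  (forall x, l x <= r x) /\
  (forall x y, x != y -> (le x y <-> r x < l y)).

Definition lengths_0_or_1 (R : realType) (T : finType) (l r : T -> R) : Prop :=
  forall x, r x - l x = 0 \/ r x - l x = 1.

Definition linear_extension (T : finType) (le L : rel T) : Prop :=
  is_poset L /\ total L /\ (forall x y, le x y -> L x y).

Definition dim_le (T : finType) (le : rel T) (k : nat) : Prop :=
  exists (n : nat) (Ls : 'I_n -> rel T),
    (n <= k)%N /\ (forall i, linear_extension le (Ls i)) /\
    (forall x y, le x y <-> (forall i, Ls i x y)).

(* Main.v *)
Require Import Defs.
From mathcomp Require Import all_boot all_order all_algebra.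
From mathcomp Require Import reals.
From mathcomp Require Import lra zify.
Set Implicit Arguments. Unset Strict Implicit.
Import Order.TTheory GRing.Theory Num.Theory.
Local Open Scope ring_scope.

Definition KT (R : realType) := (R *l (R *l nat))%type.
Definition mk (R : realType) (a b : R) (n : nat) : KT R := (a, (b, n)).

Lemma mkA (R : realType) (a a' b b' : R) n n' : a < a' -> (mk a b n <= mk a' b' n')%O.
Proof. by move=> h; rewrite /mk lexi_pair (ltW h) /= lt_geF. Qed.
Lemma mkB (R : realType) (a b b' : R) n n' : b < b' -> (mk a b n <= mk a b' n')%O.
Proof. by move=> h; rewrite /mk lexi_pair lexx /= lexi_pair (ltW h) /= lt_geF. Qed.
Lemma mkC (R : realType) (a b : R) n n' : (n <= n')%N -> (mk a b n <= mk a b n')%O.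
Proof. by move=> h; rewrite /mk lexi_pair lexx /= lexi_pair lexx /=. Qed.

Lemma absz_odd (k : int) : odd (absz (k + 1)) = ~~ odd (absz k).
Proof.
case: k => n.
  by rewrite /= addn1 /=.
case: n => [|n] //=.
by rewrite subn1 /= !negbK.
Qed.

Section Main.
Variables (R : realType) (T : finType) (l r : T -> R).

Definition ptb x := r x == l x.
Definition lv x : int := Num.floor (l x).
Definition lvR x : R := (lv x)%:~R.
Definition rkT (x : T) : nat := val (enum_rank x).
Definition rkF (x : T) : nat := (#|T| - val (enum_rank x))%N.
Definition rke (e : bool) x := if e then rkT x else rkF x.
Definition dl (e : bool) x := ~~ ptb x && (odd (absz (lv x)) == e).
Definition key1 x : KT R :=
  mk (lvR x) (if ptb x then l x - lvR x else 2 - (l x - lvR x)) (rkT x).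
Definition keyE e x : KT R :=
  mk (l x + (if dl e x then 1 else 0))
     (if ptb x then 0 else if dl e x then 1 else -1) (rke e x).
Definition LK (k : T -> KT R) : rel T := fun x y => (k x <= k y)%O.

Lemma rkT_inj : injective rkT.
Proof. by move=> x y /val_inj /enum_rank_inj. Qed.
Lemma rkT_lt x : (rkT x < #|T|)%N.
Proof. by rewrite /rkT; case: (enum_rank x) => /= m; rewrite cardE. Qed.
Lemma rke_inj e : injective (rke e).
Proof.
case: e => x y /=; first exact: rkT_inj.
rewrite /rke /rkF => h; apply: rkT_inj; have := rkT_lt x; have := rkT_lt y.
rewrite /rkT in h *; lia.
Qed.

Lemma LK_lin (k : T -> KT R) (rk : T -> nat) :
  injective rk -> (forall x, (k x).2.2 = rk x) ->
  is_poset (LK k) /\ total (LK k).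
Proof.
move=> rkI kE; split; [split; [|split]|].
- by move=> x; exact: lexx.
- move=> x y /le_anti h; apply: rkI; by rewrite -!kE h.
- by move=> y x z; exact: le_trans.
- by move=> x y; exact: le_total.
Qed.


Lemma fl_le x : lvR x <= l x.
Proof. exact: floor_le. Qed.
Lemma fl_gt x : l x < lvR x + 1.
Proof. by rewrite /lvR /lv -[1]/(1%:~R) -intrD floorD1_gt. Qed.
Lemma fl_mono x y : l x <= l y -> (lv x <= lv y)%R.
Proof. exact: le_floor. Qed.
Lemma lvR_lt x y : (lv x < lv y)%R -> lvR x < lvR y.
Proof. by rewrite /lvR ltr_int. Qed.
Lemma lv_succ x y : l x < l y -> l y <= l x + 1 -> (lv x < lv y)%R -> lv y = lv x + 1.
Proof.
move=> h1 h2 h3.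
have h4 : (lv y < lv x + 2)%R.
  rewrite /lv floor_lt_int intrD -/(lv x) -/(lvR x).
  have := fl_gt x; lra.
lia.
Qed.

End Main.

Theorem theorem3 (R : realType) (T : finType) (le : rel T) :
  is_poset le ->
  (exists l r : T -> R, interval_rep le l r /\ lengths_0_or_1 l r) ->
  dim_le le 3.
Proof.
move=> [refl [anti trans]] [l [r [[hlr rep] len]]].
have hsep : forall x y, x != y -> le x y -> r x < l y.
  by move=> x y nxy; case: (rep x y nxy).
have hnle : forall x y, x != y -> ~~ le x y -> l y <= r x.
  move=> x y nxy nl; rewrite leNgt; apply/negP => h.
  by move/negP: nl; apply; case: (rep x y nxy) => _ ->.
have hlen : forall x, (ptb l r x /\ r x = l x) \/ (~~ ptb l r x /\ r x = l x + 1).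
  move=> x; rewrite /ptb; case: (len x) => h; [left|right].
    have e : r x = l x by lra.
    by rewrite e eqxx.
  have e : r x = l x + 1 by lra.
  split => //; rewrite e; apply/negP => /eqP; lra.
pose L1 := LK (key1 l r).
pose Le e := LK (keyE l r e).
pose Ls := fun i : 'I_3 => if val i == 0%N then L1 else if val i == 1%N then Le true else Le false.
have lin1 : is_poset L1 /\ total L1 by apply: (LK_lin (@rkT_inj T)).
have linE : forall e, is_poset (Le e) /\ total (Le e).
  by move=> e; apply: (LK_lin (k := keyE l r e) (rke_inj (e:=e))).
have ext1 : forall x y, le x y -> L1 x y.
  move=> x y lxy; case: (eqVneq x y) => [->|nxy]; first by exact: lexx.
  have sxy := hsep x y nxy lxy.
  have mono : (lv l x <= lv l y)%R by apply: fl_mono; have := hlr x; lra.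
  rewrite /L1 /LK /key1.
  case: (ltP (lv l x) (lv l y)) => [lt|ge]; first by apply: mkA; apply: lvR_lt.
  have eq : lv l y = lv l x by apply/eqP; rewrite eq_le ge mono.
  rewrite /lvR eq -/(lvR l x).
  have gx := fl_gt l x; have fx := fl_le l x.
  have gy := fl_gt l y; rewrite /lvR eq -/(lvR l x) in gy.
  case: (hlen x) => [[px ex]|[px ex]].
    rewrite px; case: (hlen y) => [[py ey]|[py ey]].
      by rewrite py; apply: mkB; lra.
    by rewrite (negPf py); apply: mkB; lra.
  exfalso.
  have : (lv l x + 1 <= lv l y)%R.
    rewrite /lv floor_ge_int intrD -/(lv l x) -/(lvR l x); lra.
  rewrite eq; lia.
have extE : forall e x y, le x y -> Le e x y.
  move=> e x y lxy; case: (eqVneq x y) => [->|nxy]; first by exact: lexx.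
  have sxy := hsep x y nxy lxy.
  rewrite /Le /LK /keyE; apply: mkA.
  have h1 : l x + (if dl l r e x then 1 else 0) <= r x.
    case: (hlen x) => [[px ex]|[px ex]]; rewrite /dl ?px ?(negPf px) /=.
      lra.
    by case: ifP => _; lra.
  have h2 : l y <= l y + (if dl l r e y then 1 else 0) by case: ifP => _; lra.
  lra.
exists 3%N, Ls; split => //; split.
  move=> i; rewrite /Ls; case: ifP => _; [|case: ifP => _].
  - by split; [exact: (proj1 lin1)|split; [exact: (proj2 lin1)|exact: ext1]].
  - by split; [exact: (proj1 (linE _))|split; [exact: (proj2 (linE _))|exact: extE]].
  - by split; [exact: (proj1 (linE _))|split; [exact: (proj2 (linE _))|exact: extE]].
move=> x y; split.
  move=> lxy i; rewrite /Ls; case: ifP => _; [|case: ifP => _].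
  - exact: ext1.
  - exact: extE.
  - exact: extE.
move=> H.
case: (boolP (le x y)) => // nle; exfalso.
case: (eqVneq x y) => [exy|nxy]; first by move: nle; rewrite exy refl.
have pickE : forall e, exists i, Ls i =2 Le e.
  case; [exists (Ordinal (isT : (1 < 3)%N)) | exists (Ordinal (isT : (2 < 3)%N))]; by [].
suff [i Hi] : exists i, Ls i y x.
  have anti_i : antisymmetric (Ls i).
    rewrite /Ls; case: ifP => _; [|case: ifP => _].
    - exact: (proj1 (proj2 (proj1 lin1))).
    - exact: (proj1 (proj2 (proj1 (linE _)))).
    - exact: (proj1 (proj2 (proj1 (linE _)))).
  move/eqP: nxy; apply; apply: anti_i; by rewrite H Hi.
case: (boolP (le y x)) => [lyx|nlyx].
  by exists ord0; rewrite /Ls /=; apply: ext1.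
have i1 := hnle x y nxy nle.
have nyx : y != x by rewrite eq_sym.
have i2 := hnle y x nyx nlyx.
have tieE : forall (a b : bool -> R), (forall e, Le e y x = (mk (a e) (b e) (rke e y) <= mk (a e) (b e) (rke e x))%O) ->
   exists i, Ls i y x.
  move=> a b hc; have [h|h] := leqP (rkT y) (rkT x).
    have [i Hi] := pickE true; exists i; rewrite Hi hc; exact: mkC.
  have [i Hi] := pickE false; exists i; rewrite Hi hc; apply: mkC.
  have := rkT_lt x; have := rkT_lt y; rewrite /= /rkF /rkT in h *; lia.
have bN : forall b : bool, (~~ b == b) = false by case.
have bN' : forall b : bool, (b == ~~ b) = false by case.
case: (hlen x) => [[px ex]|[px ex]]; case: (hlen y) => [[py ey]|[py ey]].
-
  have eqyx : l y = l x by lra.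
  apply: (tieE (fun _ => l x) (fun _ => 0)) => e.
  by rewrite /Le /LK /keyE /dl px py /= eqyx addr0.
-
  have [i Hi] := pickE (~~ odd (absz (lv l y))); exists i; rewrite Hi /Le /LK /keyE.
  rewrite /dl px (negPf py) /= bN'.
  case: (boolP (l y < l x)) => [lt|nlt]; first by apply: mkA; lra.
  rewrite -leNgt in nlt; have e : l y = l x by lra.
  rewrite e; apply: mkB; lra.
-
  have [i Hi] := pickE (odd (absz (lv l x))); exists i; rewrite Hi /Le /LK /keyE.
  rewrite /dl py (negPf px) eqxx /=.
  case: (boolP (l y < l x + 1)) => [lt|nlt]; first by apply: mkA; lra.
  rewrite -leNgt in nlt; have e : l y = l x + 1 by lra.
  rewrite e addr0; apply: mkB; lra.
-
  case: (ltgtP (l y) (l x)) => [lt|gt|eqyx].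
  + have mono : (lv l y <= lv l x)%R by apply: fl_mono; lra.
    case: (ltP (lv l y) (lv l x)) => [ltv|gev].
      by exists ord0; rewrite /Ls /= /L1 /LK /key1; apply: mkA; apply: lvR_lt.
    have eqv : lv l y = lv l x by apply/eqP; rewrite eq_le mono gev.
    have [i Hi] := pickE true; exists i; rewrite Hi /Le /LK /keyE.
    rewrite /dl (negPf px) (negPf py) /= eqv.
    by case: ifP => _; apply: mkA; lra.
  + have mono : (lv l x <= lv l y)%R by apply: fl_mono; lra.
    case: (ltP (lv l x) (lv l y)) => [ltv|gev].
      have lvy : lv l y = lv l x + 1 by apply: lv_succ => //; lra.
      have [i Hi] := pickE (odd (absz (lv l x))); exists i; rewrite Hi /Le /LK /keyE.
      rewrite /dl (negPf px) (negPf py) /= eqxx lvy absz_odd bN.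
      case: (boolP (l y < l x + 1)) => [lt|nlt]; first by apply: mkA; lra.
      rewrite -leNgt in nlt; have e : l y = l x + 1 by lra.
      rewrite e addr0; apply: mkB; lra.
    have eqv : lv l y = lv l x by apply/eqP; rewrite eq_le mono gev.
    exists ord0; rewrite /Ls /= /L1 /LK /key1 (negPf px) (negPf py) /lvR eqv.
    apply: mkB; lra.
  + have eqv : lv l y = lv l x by rewrite /lv eqyx.
    have hd : forall e, dl l r e y = dl l r e x by move=> e'; rewrite /dl (negPf px) (negPf py) eqv.
    apply: (tieE (fun e => l x + (if dl l r e x then 1 else 0)) (fun e => if dl l r e x then 1 else -1)) => e.
    by rewrite /Le /LK /keyE hd eqyx (negPf px) (negPf py).
Qed.
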